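(* Assume $\mu_n\to0$, $n^{1/2}\mu_n\to\infty$, and $\theta_n/\mu_n\to\zeta\in\mathbb R\cup\{-\infty,\infty\}$. 1. If $|\zeta|<1$, then $G_{A,n,\theta_n}$ converges weakly to the cdf $\mathbf 1(\cdot\ge-\zeta)$. 2. If $1\le|\zeta|<\infty$, then $G_{A,n,\theta_n}$ converges weakly to the cdf $\mathbf 1(\cdot\ge-1/\zeta)$. 3. If $|\zeta|=\infty$, then $G_{A,n,\theta_n}$ converges weakly to the cdf $\mathbf 1(\cdot\ge0)$.
   Context: Gaussian location model: for each sample size $n$, $y_1,\dots,y_n$ are i.i.d. $N(\theta,1)$ with $\theta\in\mathbb R$ unknown; $\bar y$ is their mean. $P_{n,\theta}$ denotes the probability governing a sample of size $n$ when $\theta$ is the true parameter. Given a nonrandom tuning parameter $\mu_n>0$, the adaptive LASSO estimator is $\hat\theta_A=0$ if $|\bar y|\le\mu_n$ and $\hat\theta_A=\bar y-\mu_n^2/\bar y$ if $|\bar y|>\mu_n$. $G_{A,n,\theta}$ denotes the cdf of $\mu_n^{-1}(\hat\theta_A-\theta)$ under $P_{n,\theta}$. *)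

(* Defs.v *)
From Stdlib Require Import Reals Lra Classical ClassicalEpsilon.
Open Scope R_scope.

(* Value of a Riemann integral (arbitrary if f is not Riemann integrable on [a,b]). *)
Definition RInt (f : R -> R) (a b : R) : R :=
  epsilon (inhabits 0) (fun I => exists pr : Riemann_integrable f a b, RiemannInt pr = I).

(* Improper integral over R, as the limit of integrals over [-M, M], M -> oo
   (arbitrary if the limit does not exist). *)
Definition RInt_R (f : R -> R) : R :=
  epsilon (inhabits 0) (fun L => Un_cv (fun M : nat => RInt f (- INR M) (INR M)) L).

(* Density of N(m, 1/n), the law of the sample mean ybar of n iid N(theta,1). *)
Definition ybar_density (n : nat) (theta : R) (y : R) : R :=
  sqrt (INR n / (2 * PI)) * exp (- (INR n) * (y - theta) ^ 2 / 2).

(* Adaptive LASSO estimator as a function of ybar. *)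
Definition thetaA (mu ybar : R) : R :=
  if Rle_dec (Rabs ybar) mu then 0 else ybar - mu ^ 2 / ybar.

(* G_{A,n,theta}(x) = P_{n,theta}( mu^{-1} (thetaA - theta) <= x ). *)
Definition G_A (mu : R) (n : nat) (theta : R) (x : R) : R :=
  RInt_R (fun y => (if Rle_dec ((thetaA mu y - theta) / mu) x then 1 else 0)
                   * ybar_density n theta y).

Definition step (c : R) (x : R) : R := if Rle_dec c x then 1 else 0.

Definition weak_conv (G : nat -> R -> R) (F : R -> R) : Prop :=
  forall x, continuity_pt F x -> Un_cv (fun n => G n x) (F x).

Inductive ereal := Fin (r : R) | PInf | MInf.

Definition cv_ereal (u : nat -> R) (z : ereal) : Prop :=
  match z with
  | Fin r => Un_cv u r
  | PInf => cv_infty u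
  | MInf => cv_infty (fun n => - u n)
  end.

(* Main.v *)
Require Import Defs.
From Stdlib Require Import Reals.
From Stdlib Require Import Lra Lia Psatz Classical ClassicalEpsilon FunctionalExtensionality RList RiemannInt_SF.
Open Scope R_scope.

Lemma D_eq f x l l' : derivable_pt_lim f x l -> l = l' -> derivable_pt_lim f x l'.
Proof. intros H ->; exact H. Qed.
Lemma D_id x : derivable_pt_lim (fun y => y) x 1.
Proof. apply derivable_pt_lim_id. Qed.
Lemma D_const c x : derivable_pt_lim (fun _ => c) x 0.
Proof. apply (derivable_pt_lim_const c). Qed.
Lemma D_add f g x l1 l2 : derivable_pt_lim f x l1 -> derivable_pt_lim g x l2 ->
  derivable_pt_lim (fun y => f y + g y) x (l1 + l2).
Proof. intros; apply (derivable_pt_lim_plus f g); auto. Qed.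
Lemma D_sub f g x l1 l2 : derivable_pt_lim f x l1 -> derivable_pt_lim g x l2 ->
  derivable_pt_lim (fun y => f y - g y) x (l1 - l2).
Proof. intros; apply (derivable_pt_lim_minus f g); auto. Qed.
Lemma D_mul f g x l1 l2 : derivable_pt_lim f x l1 -> derivable_pt_lim g x l2 ->
  derivable_pt_lim (fun y => f y * g y) x (l1 * g x + f x * l2).
Proof. intros; apply (derivable_pt_lim_mult f g); auto. Qed.
Lemma D_opp f x l : derivable_pt_lim f x l -> derivable_pt_lim (fun y => - f y) x (- l).
Proof. intros; apply (derivable_pt_lim_opp f); auto. Qed.
Lemma D_exp f x l : derivable_pt_lim f x l ->
  derivable_pt_lim (fun y => exp (f y)) x (exp (f x) * l).
Proof. intros H. apply (derivable_pt_lim_comp f exp); auto. apply derivable_pt_lim_exp. Qed.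
Lemma D_comp f g x l1 l2 : derivable_pt_lim f x l1 -> derivable_pt_lim g (f x) l2 ->
  derivable_pt_lim (fun y => g (f y)) x (l2 * l1).
Proof. intros; apply (derivable_pt_lim_comp f g); auto. Qed.

Lemma D_cont f x l : derivable_pt_lim f x l -> continuity_pt f x.
Proof. intros H. apply derivable_continuous_pt. exists l; exact H. Qed.

Lemma D_local f g x l d : 0 < d -> (forall y, Rabs (y - x) < d -> f y = g y) ->
  derivable_pt_lim f x l -> derivable_pt_lim g x l.
Proof.
  intros Hd Heq H eps Heps. destruct (H eps Heps) as [del Hdel].
  assert (Hm : 0 < Rmin del d) by (apply Rmin_pos; [apply cond_pos|lra]).
  exists (mkposreal _ Hm). simpl. intros h Hh0 Hh.
  rewrite <- !Heq. apply Hdel; auto. apply Rlt_le_trans with (1 := Hh); apply Rmin_l.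
  rewrite Rminus_diag, Rabs_R0; lra.
  replace (x + h - x) with h by ring. apply Rlt_le_trans with (1 := Hh); apply Rmin_r.
Qed.

Lemma D_zero_const D : (forall x, derivable_pt_lim D x 0) -> forall a b, D a = D b.
Proof.
  intros H a b. destruct (Rtotal_order a b) as [Hab|[Hab|Hab]].
  - destruct (MVT_cor2 D (fun _ => 0) a b Hab (fun c _ => H c)) as [c [Hc _]]. lra.
  - subst; auto.
  - destruct (MVT_cor2 D (fun _ => 0) b a Hab (fun c _ => H c)) as [c [Hc _]]. lra.
Qed.

Lemma lip_of_deriv f f' a b B :
  (forall s, Rmin a b <= s <= Rmax a b -> derivable_pt_lim f s (f' s)) ->
  (forall s, Rmin a b <= s <= Rmax a b -> Rabs (f' s) <= B) ->
  Rabs (f b - f a) <= B * Rabs (b - a).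
Proof.
  intros H HB. destruct (Rtotal_order a b) as [Hab|[Hab|Hab]].
  - rewrite Rmin_left, Rmax_right in * by lra.
    destruct (MVT_cor2 f f' a b Hab H) as [c [Hc Hc2]]. rewrite Hc, Rabs_mult.
    apply Rmult_le_compat_r. apply Rabs_pos. apply HB; lra.
  - subst. rewrite !Rminus_diag, Rabs_R0. assert (0 <= B).
    { apply Rle_trans with (Rabs (f' b)). apply Rabs_pos. apply HB. rewrite Rmin_left, Rmax_left; lra. }
    lra.
  - rewrite Rmin_right, Rmax_left in * by lra.
    destruct (MVT_cor2 f f' b a Hab H) as [c [Hc Hc2]].
    rewrite <- Rabs_Ropp, <- (Rabs_Ropp (b - a)).
    replace (- (f b - f a)) with (f a - f b) by ring. replace (- (b - a)) with (a - b) by ring.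
    rewrite Hc, Rabs_mult. apply Rmult_le_compat_r. apply Rabs_pos. apply HB; lra.
Qed.

Definition cont (f : R -> R) := forall x, continuity_pt f x.

Lemma C_add f g : cont f -> cont g -> cont (fun y => f y + g y).
Proof. intros Hf Hg x; apply (continuity_pt_plus f g); auto. Qed.
Lemma C_mul f g : cont f -> cont g -> cont (fun y => f y * g y).
Proof. intros Hf Hg x; apply (continuity_pt_mult f g); auto. Qed.
Lemma C_sub f g : cont f -> cont g -> cont (fun y => f y - g y).
Proof. intros Hf Hg x; apply (continuity_pt_minus f g); auto. Qed.
Lemma C_opp f : cont f -> cont (fun y => - f y).
Proof. intros Hf x; apply (continuity_pt_opp f); auto. Qed.
Lemma C_id : cont (fun y => y).
Proof. intros x; apply derivable_continuous_pt, derivable_pt_id. Qed.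
Lemma C_const c : cont (fun _ => c).
Proof. intros x; apply continuity_pt_const; intros a b; auto. Qed.
Lemma C_comp f g : cont f -> cont g -> cont (fun y => g (f y)).
Proof. intros Hf Hg x; apply (continuity_pt_comp f g); auto. Qed.
Lemma C_abs f : cont f -> cont (fun y => Rabs (f y)).
Proof. intros Hf; apply (C_comp f Rabs Hf). intros x; apply Rcontinuity_abs. Qed.

Lemma RInt_eq f a b (pr : Riemann_integrable f a b) : RInt f a b = RiemannInt pr.
Proof.
  unfold RInt.
  destruct (epsilon_spec (inhabits 0) (fun I => exists pr : Riemann_integrable f a b, RiemannInt pr = I)) as [pr' H].
  - exists (RiemannInt pr), pr; reflexivity.
  - rewrite <- H; apply RiemannInt_P5.
Qed.

Lemma cont_int f a b : cont f -> Riemann_integrable f a b.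
Proof.
  intros Hf. destruct (Rle_dec a b).
  - apply continuity_implies_RiemannInt; auto.
  - apply RiemannInt_P1, continuity_implies_RiemannInt; auto. lra.
Qed.

Lemma RInt_chasles_pr f a b c : Riemann_integrable f a b -> Riemann_integrable f b c ->
  RInt f a b + RInt f b c = RInt f a c.
Proof.
  intros p1 p2. rewrite (RInt_eq f a b p1), (RInt_eq f b c p2), (RInt_eq f a c (RiemannInt_P24 p1 p2)).
  apply RiemannInt_P26.
Qed.

Lemma RInt_chasles f a b c : cont f -> RInt f a b + RInt f b c = RInt f a c.
Proof. intros; apply RInt_chasles_pr; apply cont_int; auto. Qed.

Lemma RInt_aa f a : RInt f a a = 0.
Proof. rewrite (RInt_eq f a a (RiemannInt_P7 f a)). apply RiemannInt_P9. Qed.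

Lemma RInt_lin f g l a b : Riemann_integrable f a b -> Riemann_integrable g a b ->
  RInt (fun x => f x + l * g x) a b = RInt f a b + l * RInt g a b.
Proof.
  intros p1 p2. rewrite (RInt_eq f a b p1), (RInt_eq g a b p2),
    (RInt_eq _ a b (RiemannInt_P10 l p1 p2)). apply RiemannInt_P13.
Qed.

Lemma RInt_const c a b : RInt (fun _ => c) a b = c * (b - a).
Proof. change (RInt (fct_cte c) a b = c * (b - a)). rewrite (RInt_eq (fct_cte c) a b (RiemannInt_P14 a b c)). apply RiemannInt_P15. Qed.

Lemma RInt_scal f l a b : Riemann_integrable f a b ->
  RInt (fun x => l * f x) a b = l * RInt f a b.
Proof.
  intros p.
  replace (fun x => l * f x) with (fun x => (fun _ : R => 0) x + l * f x)
    by (apply functional_extensionality; intros; ring).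
  rewrite RInt_lin; auto. rewrite RInt_const. ring.
  apply RiemannInt_P14.
Qed.


Lemma RInt_le f g a b : Riemann_integrable f a b -> Riemann_integrable g a b -> a <= b ->
  (forall x, a < x < b -> f x <= g x) -> RInt f a b <= RInt g a b.
Proof.
  intros p1 p2 Hab H. rewrite (RInt_eq f a b p1), (RInt_eq g a b p2).
  apply RiemannInt_P19; auto.
Qed.

Lemma RInt_ext f g a b : a <= b -> (forall x, a < x < b -> f x = g x) -> Riemann_integrable f a b ->
  Riemann_integrable g a b -> RInt f a b = RInt g a b.
Proof.
  intros Hab H p1 p2. apply Rle_antisym; apply RInt_le; auto; intros x Hx; rewrite H; auto; lra.
Qed.

Lemma RInt_abs_le f a b : Riemann_integrable f a b -> a <= b ->
  Rabs (RInt f a b) <= RInt (fun x => Rabs (f x)) a b.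
Proof.
  intros p Hab. rewrite (RInt_eq f a b p), (RInt_eq _ a b (RiemannInt_P16 p)).
  apply RiemannInt_P17; auto.
Qed.

Lemma RInt_pos f a b : Riemann_integrable f a b -> a <= b -> (forall x, a < x < b -> 0 <= f x) ->
  0 <= RInt f a b.
Proof.
  intros p Hab H. replace 0 with (RInt (fun _ => 0) a b) by (rewrite RInt_const; ring).
  apply RInt_le; auto. apply RiemannInt_P14.
Qed.

Lemma RInt_deriv f a t : cont f -> derivable_pt_lim (fun s => RInt f a s) t (f t).
Proof.
  intros Hf. set (T := Rabs t + Rabs a + 1).
  assert (h : - T <= T) by (unfold T; pose proof (Rabs_pos t); pose proof (Rabs_pos a); lra).
  assert (C0 : forall x, -T <= x <= T -> continuity_pt f x) by (intros; apply Hf).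
  set (P := primitive h (FTC_P1 h C0)).
  assert (HP : forall s, -T <= s <= T -> RInt f a s = P s - P a).
  { intros s Hs.
    assert (Hin : forall x, -T <= x <= T -> P x = RInt f (-T) x).
    { intros x Hx. unfold P, primitive. destruct (Rle_dec (-T) x); [|lra].
      destruct (Rle_dec x T); [|lra]. symmetry; apply RInt_eq. }
    assert (Ha : -T <= a <= T).
    { unfold T; unfold Rabs; destruct (Rcase_abs t), (Rcase_abs a); lra. }
    rewrite Hin, Hin by auto. rewrite <- (RInt_chasles f (-T) a s Hf). ring. }
  apply D_local with (f := fun s => P s - P a) (d := 1). lra.
  - intros y Hy. rewrite HP; auto. unfold T.
    unfold Rabs in *; destruct (Rcase_abs (y - t)), (Rcase_abs t), (Rcase_abs a); lra.
  - apply D_eq with (f t - 0). apply D_sub. apply RiemannInt_P28.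
    unfold T; unfold Rabs; destruct (Rcase_abs t), (Rcase_abs a); lra.
    apply D_const. ring.
Qed.

Lemma FTC f F a b : cont f -> (forall x, derivable_pt_lim F x (f x)) -> RInt f a b = F b - F a.
Proof.
  intros Hf HF.
  assert (H := D_zero_const (fun s => RInt f a s - F s)).
  assert (E : RInt f a b - F b = RInt f a a - F a).
  { apply H. intros x. apply D_eq with (f x - f x). apply D_sub; auto. apply RInt_deriv; auto. ring. }
  rewrite RInt_aa in E. lra.
Qed.

Lemma RInt_subst f c d a b : cont f ->
  RInt (fun x => c * f (c * x + d)) a b = RInt f (c * a + d) (c * b + d).
Proof.
  intros Hf.
  rewrite (FTC _ (fun x => RInt f 0 (c * x + d))).
  - rewrite <- (RInt_chasles f 0 (c * a + d) (c * b + d) Hf). ring.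
  - apply C_mul. apply C_const. apply (C_comp (fun x => c * x + d) f); auto.
    intros x; apply D_cont with c. apply D_eq with (0 * x + c * 1 + 0).
    apply D_add. apply D_mul; [apply D_const|apply D_id]. apply D_const. ring.
  - intros x. apply D_eq with (f (c * x + d) * c).
    apply (D_comp (fun x => c * x + d) (fun s => RInt f 0 s)).
    apply D_eq with (0 * x + c * 1 + 0).
    apply D_add. apply D_mul; [apply D_const|apply D_id]. apply D_const. ring.
    apply RInt_deriv; auto. ring.
Qed.

Lemma param_deriv (f df : R -> R -> R) t0 C d : 0 < d -> 0 <= C ->
  (forall t, cont (f t)) -> (forall t, cont (df t)) ->
  (forall t x, derivable_pt_lim (fun s => f s x) t (df t x)) ->
  (forall t x, Rabs (t - t0) < d -> 0 <= x <= 1 -> Rabs (df t x - df t0 x) <= C * Rabs (t - t0)) ->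
  derivable_pt_lim (fun t => RInt (f t) 0 1) t0 (RInt (df t0) 0 1).
Proof.
  intros Hd HC Hf Hdf Hder Hlip eps Heps.
  assert (Hm : 0 < Rmin d (eps / (C + 1))).
  { apply Rmin_pos; auto. apply Rdiv_lt_0_compat; lra. }
  exists (mkposreal _ Hm). simpl. intros h Hh0 Hh.
  assert (Hhd : Rabs h < d) by (apply Rlt_le_trans with (1 := Hh); apply Rmin_l).
  assert (Hhe : Rabs h < eps / (C + 1)) by (apply Rlt_le_trans with (1 := Hh); apply Rmin_r).
  set (k := fun x => f (t0 + h) x - f t0 x - h * df t0 x).
  assert (Ek : RInt k 0 1 = RInt (f (t0 + h)) 0 1 - RInt (f t0) 0 1 - h * RInt (df t0) 0 1).
  { replace k with (fun x => (fun x => f (t0 + h) x + (-1) * f t0 x) x + (- h) * df t0 x)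
      by (apply functional_extensionality; intros; unfold k; ring).
    rewrite RInt_lin, RInt_lin; try apply cont_int; auto. ring.
    apply C_add; auto. apply C_mul; auto. apply C_const. }
  assert (Hk : forall x, 0 <= x <= 1 -> Rabs (k x) <= C * Rabs h * Rabs h).
  { intros x Hx.
    set (phi := fun s => f s x - s * df t0 x).
    replace (k x) with (phi (t0 + h) - phi t0) by (unfold k, phi; ring).
    replace (C * Rabs h * Rabs h) with (C * Rabs h * Rabs (t0 + h - t0)) by (do 2 f_equal; ring).
    apply lip_of_deriv with (f' := fun s => df s x - df t0 x).
    - intros s _. apply D_eq with (df s x - (1 * df t0 x + s * 0)).
      apply D_sub. apply Hder. apply (D_mul (fun y => y) (fun _ => df t0 x)). apply D_id. apply D_const. ring.
    - intros s Hs. apply Rle_trans with (C * Rabs (s - t0)).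
      apply Hlip; auto.
      { apply Rle_lt_trans with (Rabs h); auto.
        unfold Rmin, Rmax in Hs; destruct (Rle_dec t0 (t0 + h));
        unfold Rabs; destruct (Rcase_abs (s - t0)), (Rcase_abs h); lra. }
      apply Rmult_le_compat_l; auto.
      unfold Rmin, Rmax in Hs; destruct (Rle_dec t0 (t0 + h));
        unfold Rabs; destruct (Rcase_abs (s - t0)), (Rcase_abs h); lra. }
  assert (Hint : Rabs (RInt k 0 1) <= C * Rabs h * Rabs h).
  { apply Rle_trans with (RInt (fun x => Rabs (k x)) 0 1).
    apply RInt_abs_le. apply cont_int. unfold k. apply C_sub. apply C_sub; auto.
    apply C_mul; [apply C_const|auto]. lra.
    apply Rle_trans with (RInt (fun _ => C * Rabs h * Rabs h) 0 1).
    apply RInt_le. apply cont_int. apply C_abs. unfold k.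
    apply C_sub. apply C_sub; auto.
    apply C_mul; [apply C_const|auto].
    apply RiemannInt_P14. lra. intros x Hx; apply Hk; lra.
    rewrite RInt_const. lra. }
  replace ((RInt (f (t0 + h)) 0 1 - RInt (f t0) 0 1) / h - RInt (df t0) 0 1) with (RInt k 0 1 / h)
    by (rewrite Ek; field; auto).
  unfold Rdiv. rewrite Rabs_mult, Rabs_inv.
  assert (Hah : 0 < Rabs h) by (apply Rabs_pos_lt; auto).
  apply Rle_lt_trans with (C * Rabs h).
  { apply Rmult_le_reg_r with (Rabs h); auto. rewrite Rmult_assoc, Rinv_l by lra. lra. }
  apply Rle_lt_trans with (C * (eps / (C + 1))). apply Rmult_le_compat_l; lra.
  apply Rmult_lt_reg_r with (C + 1). lra. field_simplify; nra.
Qed.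

Lemma D_pow2 f x l : derivable_pt_lim f x l ->
  derivable_pt_lim (fun y => f y ^ 2) x (2 * f x * l).
Proof.
  intros H. apply D_eq with (l * f x + f x * l).
  replace (fun y => f y ^ 2) with (fun y => f y * f y) by (apply functional_extensionality; intros; ring).
  apply D_mul; auto. ring.
Qed.
Lemma D_divc f x l c : derivable_pt_lim f x l ->
  derivable_pt_lim (fun y => f y / c) x (l / c).
Proof. intros; apply derivable_pt_lim_div_scal; auto. Qed.

Ltac dtac := repeat first [ apply D_const | apply D_id | eapply D_divc | eapply D_add | eapply D_sub
  | eapply D_mul | eapply D_opp | eapply D_exp | eapply D_pow2 ].

Lemma C_exp f : cont f -> cont (fun y => exp (f y)).
Proof. intros Hf. apply (C_comp f exp Hf). intros x; apply derivable_continuous_pt, derivable_pt_exp. Qed.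
Lemma C_pow2 f : cont f -> cont (fun y => f y ^ 2).
Proof. intros Hf. replace (fun y => f y ^ 2) with (fun y => f y * f y)
  by (apply functional_extensionality; intros; ring). apply C_mul; auto. Qed.
Lemma C_divc f c : cont f -> cont (fun y => f y / c).
Proof. intros Hf. apply (C_mul f (fun _ => / c)); auto. apply C_const. Qed.
Lemma C_inv f : cont f -> (forall y, f y <> 0) -> cont (fun y => / f y).
Proof. intros Hf Hn x. apply (continuity_pt_inv f); auto. Qed.

Ltac ctac := repeat first [ apply C_const | apply C_id | apply C_divc | apply C_add | apply C_sub
  | apply C_mul | apply C_opp | apply C_exp | apply C_pow2 ].

Definition g (s : R) := exp (- s ^ 2 / 2).
Definition f2 (t x : R) := exp (- (t ^ 2 * (1 + x ^ 2)) / 2) / (1 + x ^ 2).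
Definition df2 (t x : R) := - t * exp (- (t ^ 2 * (1 + x ^ 2)) / 2).
Definition Gi (t : R) := RInt g 0 t.
Definition E (t : R) := RInt (f2 t) 0 1 + Gi t ^ 2 / 2.

Lemma g_cont : cont g.
Proof. unfold g; ctac. Qed.
Lemma g_pos s : 0 < g s.
Proof. apply exp_pos. Qed.

Lemma onepx2 x : 1 <= 1 + x ^ 2.
Proof. nra. Qed.

Lemma f2_cont t : cont (f2 t).
Proof.
  unfold f2. apply (C_mul (fun x => exp (- (t ^ 2 * (1 + x ^ 2)) / 2)) (fun x => / (1 + x ^ 2))).
  ctac. apply C_inv. ctac. intros y; pose proof (onepx2 y); lra.
Qed.
Lemma df2_cont t : cont (df2 t).
Proof. unfold df2; ctac. Qed.

Lemma f2_deriv t x : derivable_pt_lim (fun s => f2 s x) t (df2 t x).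
Proof.
  unfold f2, df2. eapply D_eq. dtac. simpl.
  set (e := exp _). pose proof (onepx2 x). simpl in H. field. lra.
Qed.

Lemma df2_deriv t x : derivable_pt_lim (fun s => df2 s x) t
   ((t ^ 2 * (1 + x ^ 2) - 1) * exp (- (t ^ 2 * (1 + x ^ 2)) / 2)).
Proof. unfold df2. eapply D_eq. dtac. simpl. set (e := exp _). field. Qed.

Lemma exp_le1 a : a <= 0 -> exp a <= 1.
Proof. intros H. rewrite <- exp_0. destruct (Req_dec a 0). subst; lra. left; apply exp_increasing; lra. Qed.

Lemma df2_lip t0 t x : Rabs (t - t0) < 1 -> 0 <= x <= 1 ->
  Rabs (df2 t x - df2 t0 x) <= (2 * (Rabs t0 + 1) ^ 2 + 1) * Rabs (t - t0).
Proof.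
  intros Ht Hx. apply lip_of_deriv with (f := fun s => df2 s x)
    (f' := fun s => (s ^ 2 * (1 + x ^ 2) - 1) * exp (- (s ^ 2 * (1 + x ^ 2)) / 2)).
  - intros s _. apply df2_deriv.
  - intros s Hs.
    assert (Hsa : Rabs s <= Rabs t0 + 1).
    { unfold Rmin, Rmax in Hs. destruct (Rle_dec t0 t); unfold Rabs in *;
      destruct (Rcase_abs s), (Rcase_abs t0), (Rcase_abs (t - t0)); lra. }
    assert (Hs2 : s ^ 2 <= (Rabs t0 + 1) ^ 2).
    { rewrite <- (pow2_abs s). apply pow_incr. split; auto. apply Rabs_pos. }
    assert (He : 0 < exp (- (s ^ 2 * (1 + x ^ 2)) / 2) <= 1).
    { split. apply exp_pos. apply exp_le1. assert (0 <= s^2) by nra. assert (0 <= x ^ 2) by nra. nra. }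
    rewrite Rabs_mult, (Rabs_pos_eq (exp _)) by lra.
    assert (Hx2 : x ^ 2 <= 1) by nra.
    assert (0 <= s ^ 2) by nra. assert (0 <= x ^ 2) by nra.
    assert (Rabs (s ^ 2 * (1 + x ^ 2) - 1) <= 2 * (Rabs t0 + 1) ^ 2 + 1).
    { apply Rabs_le. split; nra. }
    assert (0 <= Rabs (s ^ 2 * (1 + x ^ 2) - 1)) by apply Rabs_pos.
    nra.
Qed.

Lemma E_deriv t : derivable_pt_lim E t 0.
Proof.
  unfold E.
  apply D_eq with (RInt (df2 t) 0 1 + (2 * Gi t * g t) / 2).
  apply D_add.
  - apply param_deriv with (C := 2 * (Rabs t + 1) ^ 2 + 1) (d := 1).
    lra. pose proof (Rabs_pos t); nra.
    apply f2_cont. apply df2_cont. apply f2_deriv.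
    intros; apply df2_lip; auto.
  - apply D_divc. apply (D_pow2 Gi). unfold Gi. apply RInt_deriv, g_cont.
  - assert (Hdf : df2 t = fun x => (- g t) * (t * g (t * x + 0))).
    { apply functional_extensionality; intros x. unfold df2, g.
      assert (Eq : - (t ^ 2 * (1 + x ^ 2)) / 2 = - t ^ 2 / 2 + - (t * x + 0) ^ 2 / 2) by (unfold Rdiv; ring). rewrite Eq.
      rewrite exp_plus. ring. }
    rewrite Hdf, RInt_scal, RInt_subst.
    replace (t * 0 + 0) with 0 by ring. replace (t * 1 + 0) with t by ring.
    unfold Gi. field. apply g_cont. apply cont_int.
    apply (C_mul (fun _ => t) (fun x => g (t * x + 0))). apply C_const.
    apply (C_comp (fun x => t * x + 0) g). ctac. apply g_cont.
Qed.

Lemma E_0 : E 0 = PI / 4.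
Proof.
  unfold E, Gi. rewrite RInt_aa.
  replace (f2 0) with (fun x => / (1 + x ^ 2)).
  rewrite (FTC _ atan). rewrite atan_1, atan_0. field.
  apply C_inv. ctac. intros y; pose proof (onepx2 y); lra.
  intros x; apply derivable_pt_lim_atan.
  apply functional_extensionality; intros x; unfold f2.
  replace (- (0 ^ 2 * (1 + x ^ 2)) / 2) with 0 by (unfold Rdiv; ring). rewrite exp_0. field.
  pose proof (onepx2 x); lra.
Qed.

Lemma E_const t : E t = PI / 4.
Proof. rewrite <- E_0. apply D_zero_const. apply E_deriv. Qed.

Lemma F_bounds t : 0 <= RInt (f2 t) 0 1 <= exp (- t ^ 2 / 2).
Proof.
  split.
  - apply RInt_pos. apply cont_int, f2_cont. lra. intros x _. unfold f2.
    apply Rlt_le, Rdiv_lt_0_compat. apply exp_pos. pose proof (onepx2 x); lra.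
  - replace (exp (- t ^ 2 / 2)) with (RInt (fun _ => exp (- t ^ 2 / 2)) 0 1) by (rewrite RInt_const; ring).
    apply RInt_le. apply cont_int, f2_cont. apply RiemannInt_P14. lra.
    intros x Hx. unfold f2. pose proof (onepx2 x).
    assert (exp (- (t ^ 2 * (1 + x ^ 2)) / 2) <= exp (- t ^ 2 / 2)).
    { destruct (Req_dec x 0). subst. replace (- (t ^ 2 * (1 + 0 ^ 2)) / 2) with (- t ^ 2 / 2) by (unfold Rdiv; ring). lra.
      destruct (Req_dec t 0). subst. replace (- (0 ^ 2 * (1 + x ^ 2)) / 2) with (- 0 ^ 2 / 2) by (unfold Rdiv; ring). lra.
      left. apply exp_increasing. assert (0 < t^2) by (pose proof (Rsqr_pos_lt t H1); unfold Rsqr in *; simpl; nra).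
      assert (0 < t ^ 2 * x ^ 2). { apply Rmult_lt_0_compat; auto. pose proof (Rsqr_pos_lt x H0); unfold Rsqr in *; simpl; nra. } nra. }
    assert (0 < exp (- (t ^ 2 * (1 + x ^ 2)) / 2)) by apply exp_pos.
    apply Rmult_le_reg_r with (1 + x ^ 2). lra. unfold Rdiv. rewrite Rmult_assoc, Rinv_l by lra. nra.
Qed.

Lemma Gi_sq t : Gi t ^ 2 = PI / 2 - 2 * RInt (f2 t) 0 1.
Proof. pose proof (E_const t). unfold E in H. lra. Qed.

Lemma Gi_nonneg K : 0 <= K -> 0 <= Gi K.
Proof. intros HK. apply RInt_pos. apply cont_int, g_cont. auto. intros; left; apply g_pos. Qed.

Lemma g_sym K : RInt g (-K) K = 2 * Gi K.
Proof.
  pose proof (RInt_subst g (-1) 0 0 K g_cont) as H.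
  replace (fun x => -1 * g (-1 * x + 0)) with (fun x => -1 * g x) in H.
  rewrite RInt_scal in H by (apply cont_int, g_cont).
  replace (-1 * 0 + 0) with 0 in H by ring. replace (-1 * K + 0) with (-K) in H by ring.
  pose proof (RInt_chasles g (-K) 0 (-K) g_cont). rewrite RInt_aa in H0.
  pose proof (RInt_chasles g (-K) 0 K g_cont). unfold Gi. lra.
  apply functional_extensionality; intros x. unfold g. f_equal. f_equal. f_equal. ring.
Qed.

Lemma PI_ge : 7/4 <= PI.
Proof. unfold PI. destruct pi2_int; lra. Qed.

Lemma gauss_upper K : 0 <= K -> RInt g (-K) K <= sqrt (2 * PI).
Proof.
  intros HK. rewrite g_sym. pose proof (Gi_sq K). pose proof (F_bounds K). pose proof (Gi_nonneg K HK).
  rewrite <- (sqrt_pow2 (2 * Gi K)) by lra. apply sqrt_le_1_alt. nra.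
Qed.

Lemma exp_tail K : 0 < K -> exp (- K ^ 2 / 2) * K ^ 2 <= 2.
Proof.
  intros HK. pose proof (exp_ineq1_le (K ^ 2 / 2)).
  assert (Hp : exp (- K ^ 2 / 2) * exp (K ^ 2 / 2) = 1).
  { rewrite <- exp_plus. replace (- K ^ 2 / 2 + K ^ 2 / 2) with 0 by (unfold Rdiv; ring). apply exp_0. }
  pose proof (exp_pos (- K ^ 2 / 2)). assert (0 <= K^2) by nra. nra.
Qed.

Lemma gauss_lower K : 0 < K -> sqrt (2 * PI) * (1 - 5 / K ^ 2) <= RInt g (-K) K.
Proof.
  intros HK. rewrite g_sym. pose proof (Gi_sq K). pose proof (F_bounds K). pose proof (Gi_nonneg K (Rlt_le _ _ HK)).
  pose proof (exp_tail K HK). pose proof PI_ge.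
  set (S := sqrt (2 * PI)). assert (HS2 : S * S = 2 * PI) by (apply sqrt_sqrt; lra).
  assert (HS : 0 < S) by (apply sqrt_lt_R0; lra).
  set (X := 2 * Gi K). set (e := exp (- K ^ 2 / 2)) in *.
  assert (HX2 : X * X >= S * S - 8 * e) by (unfold X; lra).
  assert (HXS : X <= S) by (pose proof (gauss_upper K (Rlt_le _ _ HK)) as HU; rewrite g_sym in HU; exact HU).
  assert (HK2 : 0 < K ^ 2) by (apply pow_lt; lra).
  assert (S - 8 * e / S <= X).
  { assert (X * X <= X * S) by (apply Rmult_le_compat_l; unfold X in *; lra).
    replace (S - 8 * e / S) with ((S * S - 8 * e) / S) by (field; lra).
    apply Rmult_le_reg_r with S; auto. unfold Rdiv. rewrite Rmult_assoc, Rinv_l, Rmult_1_r by lra. lra. }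
  assert (8 * e / S <= S * (5 / K ^ 2)).
  { unfold Rdiv. apply Rmult_le_reg_r with (S * K ^ 2). nra.
    replace (8 * e * / S * (S * K ^ 2)) with (8 * (e * K ^ 2)) by (field; lra).
    replace (S * (5 * / K ^ 2) * (S * K ^ 2)) with (5 * (S * S)) by (field; lra). nra. }
  unfold X in *. nra.
Qed.

Lemma dens_g n th : ybar_density n th =
  fun y => / sqrt (2 * PI) * (sqrt (INR n) * g (sqrt (INR n) * y + (- sqrt (INR n) * th))).
Proof.
  apply functional_extensionality; intros y. unfold ybar_density, g.
  pose proof PI_ge. pose proof (pos_INR n).
  rewrite sqrt_div by lra.
  assert (Hs : sqrt (INR n) * sqrt (INR n) = INR n) by (apply sqrt_sqrt; lra).
  assert (E1 : - INR n * (y - th) ^ 2 / 2 = - (sqrt (INR n) * y + - sqrt (INR n) * th) ^ 2 / 2).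
  { replace (- INR n * (y - th) ^ 2 / 2) with (- (sqrt (INR n) * sqrt (INR n)) * (y - th) ^ 2 / 2) by (rewrite Hs; reflexivity).
    unfold Rdiv; ring. }
  rewrite E1. assert (0 < sqrt (2 * PI)) by (apply sqrt_lt_R0; lra). field. lra.
Qed.

Lemma dens_cont n th : cont (ybar_density n th).
Proof. unfold ybar_density. ctac. Qed.

Lemma dens_pos n th y : 0 <= ybar_density n th y.
Proof. unfold ybar_density. apply Rmult_le_pos. apply sqrt_pos. left; apply exp_pos. Qed.

Lemma dens_window n th b :
  RInt (ybar_density n th) (th - b) (th + b) = RInt g (- (sqrt (INR n) * b)) (sqrt (INR n) * b) / sqrt (2 * PI).
Proof.
  rewrite dens_g. rewrite RInt_scal. rewrite RInt_subst by apply g_cont.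
  replace (sqrt (INR n) * (th - b) + - sqrt (INR n) * th) with (- (sqrt (INR n) * b)) by ring.
  replace (sqrt (INR n) * (th + b) + - sqrt (INR n) * th) with (sqrt (INR n) * b) by ring.
  unfold Rdiv; ring.
  apply cont_int. apply (C_mul (fun _ => sqrt (INR n))). apply C_const.
  apply (C_comp (fun y => sqrt (INR n) * y + - sqrt (INR n) * th) g). ctac. apply g_cont.
Qed.

Lemma dens_win_le1 n th b : 0 <= b -> RInt (ybar_density n th) (th - b) (th + b) <= 1.
Proof.
  intros Hb. rewrite dens_window. pose proof PI_ge.
  assert (0 < sqrt (2 * PI)) by (apply sqrt_lt_R0; lra).
  pose proof (gauss_upper (sqrt (INR n) * b)). assert (0 <= sqrt (INR n) * b) by (apply Rmult_le_pos; auto; apply sqrt_pos).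
  apply Rmult_le_reg_r with (sqrt (2 * PI)); auto. unfold Rdiv. rewrite Rmult_assoc, Rinv_l, Rmult_1_r by lra. lra.
Qed.

Lemma dens_le1 n th p q : p <= q -> RInt (ybar_density n th) p q <= 1.
Proof.
  intros Hpq. set (b := Rabs p + Rabs q + Rabs th).
  assert (Hb : 0 <= b) by (unfold b; pose proof (Rabs_pos p); pose proof (Rabs_pos q); pose proof (Rabs_pos th); lra).
  assert (H1 : th - b <= p) by (unfold b; unfold Rabs; destruct (Rcase_abs p), (Rcase_abs q), (Rcase_abs th); lra).
  assert (H2 : q <= th + b) by (unfold b; unfold Rabs; destruct (Rcase_abs p), (Rcase_abs q), (Rcase_abs th); lra).
  pose proof (dens_win_le1 n th b Hb).
  rewrite <- (RInt_chasles _ (th - b) p (th + b)) in H by apply dens_cont.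
  rewrite <- (RInt_chasles _ p q (th + b)) in H by apply dens_cont.
  assert (0 <= RInt (ybar_density n th) (th - b) p).
  { apply RInt_pos; auto. apply cont_int, dens_cont. intros; apply dens_pos. }
  assert (0 <= RInt (ybar_density n th) q (th + b)).
  { apply RInt_pos; auto. apply cont_int, dens_cont. intros; apply dens_pos. }
  lra.
Qed.

Lemma dens_lower n th b : (1 <= n)%nat -> 0 < b ->
  1 - 5 / (INR n * b ^ 2) <= RInt (ybar_density n th) (th - b) (th + b).
Proof.
  intros Hn Hb. rewrite dens_window. pose proof PI_ge.
  assert (HS : 0 < sqrt (2 * PI)) by (apply sqrt_lt_R0; lra).
  assert (Hn' : 1 <= INR n) by (apply (le_INR 1); auto).
  assert (Hsn : 0 < sqrt (INR n)) by (apply sqrt_lt_R0; lra).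
  assert (HK : 0 < sqrt (INR n) * b) by (apply Rmult_lt_0_compat; auto).
  pose proof (gauss_lower _ HK).
  replace ((sqrt (INR n) * b) ^ 2) with (INR n * b ^ 2) in H0.
  apply Rmult_le_reg_r with (sqrt (2 * PI)); auto. unfold Rdiv. rewrite Rmult_assoc, Rinv_l, Rmult_1_r by lra.
  unfold Rdiv in H0. lra.
  rewrite Rpow_mult_distr. rewrite pow2_sqrt by lra. reflexivity.
Qed.

Lemma RInt_R_bounds (h phi : R -> R) :
  (forall a b, Riemann_integrable h a b) -> cont phi ->
  (forall y, 0 <= h y <= phi y) -> (forall p q, p <= q -> RInt phi p q <= 1) ->
  (0 <= RInt_R h <= 1) /\
  (forall p q, p <= q -> (forall y, p <= y <= q -> h y = phi y) -> RInt phi p q <= RInt_R h) /\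
  (forall p q, p <= q -> (forall y, p <= y <= q -> h y = 0) -> RInt_R h <= 1 - RInt phi p q).
Proof.
  intros Hh Hphi Hb H1.
  set (u := fun M : nat => RInt h (- INR M) (INR M)).
  assert (Hpos : forall a b, a <= b -> 0 <= RInt h a b).
  { intros a b Hab. apply RInt_pos; auto. intros; apply Hb. }
  assert (Hgr : Un_growing u).
  { intros M. unfold u. rewrite S_INR.
    rewrite <- (RInt_chasles_pr h (- (INR M + 1)) (- INR M) (INR M + 1)) by auto.
    rewrite <- (RInt_chasles_pr h (- INR M) (INR M) (INR M + 1)) by auto.
    pose proof (pos_INR M).
    pose proof (Hpos (- (INR M + 1)) (- INR M)). pose proof (Hpos (INR M) (INR M + 1)). lra. }
  assert (Hle : forall a b, a <= b -> RInt h a b <= RInt phi a b).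
  { intros a b Hab. apply RInt_le; auto. apply cont_int; auto. intros; apply Hb. }
  assert (Hub : forall M, u M <= 1).
  { intros M. unfold u. pose proof (pos_INR M).
    apply Rle_trans with (RInt phi (- INR M) (INR M)). apply Hle; lra. apply H1; lra. }
  destruct (growing_cv u Hgr) as [l Hl].
  { exists 1. intros x [M ->]. apply Hub. }
  assert (HR : RInt_R h = l).
  { unfold RInt_R. assert (Hs := epsilon_spec (inhabits 0) (fun L => Un_cv u L)).
    fold u. apply UL_sequence with u; auto. apply Hs. exists l; auto. }
  rewrite HR.
  assert (Hge : forall M, u M <= l) by (apply growing_ineq; auto).
  assert (Hlim_le : forall B M0, (forall M, (M0 <= M)%nat -> u M <= B) -> l <= B).
  { intros B M0 HB. destruct (Rle_dec l B) as [|Hn]; auto.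
    destruct (Hl (l - B)) as [N HN]. lra.
    specialize (HN (max N M0) (Nat.le_max_l _ _)). specialize (HB (max N M0) (Nat.le_max_r _ _)).
    unfold Rdist in HN. unfold Rabs in HN; destruct (Rcase_abs (u (max N M0) - l)); lra. }
  assert (Hbig : forall p q, exists M0, forall M, (M0 <= M)%nat -> - INR M <= p /\ q <= INR M).
  { intros p q. destruct (INR_unbounded (Rabs p + Rabs q)) as [M0 HM0]. exists M0.
    intros M HM. apply le_INR in HM.
    unfold Rabs in HM0; destruct (Rcase_abs p), (Rcase_abs q); lra. }
  split; [split|split].
  - specialize (Hge 0%nat). unfold u in Hge. simpl in Hge. rewrite Ropp_0, RInt_aa in Hge. auto.
  - apply (Hlim_le 1 0%nat). intros; auto.
  - intros p q Hpq Heq. destruct (Hbig p q) as [M0 HM0]. destruct (HM0 M0 (le_n _)) as [Ha Hb'].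
    apply Rle_trans with (u M0); auto. unfold u.
    rewrite <- (RInt_chasles_pr h (- INR M0) p (INR M0)) by auto.
    rewrite <- (RInt_chasles_pr h p q (INR M0)) by auto.
    rewrite (RInt_ext h phi p q); auto. pose proof (Hpos _ _ Ha). pose proof (Hpos _ _ Hb'). lra.
    intros; apply Heq; lra. apply cont_int; auto.
  - intros p q Hpq Heq. destruct (Hbig p q) as [M0 HM0]. apply (Hlim_le _ M0).
    intros M HM. destruct (HM0 M HM) as [Ha Hb']. unfold u.
    rewrite <- (RInt_chasles_pr h (- INR M) p (INR M)) by auto.
    rewrite <- (RInt_chasles_pr h p q (INR M)) by auto.
    rewrite (RInt_ext h (fun _ => 0) p q); auto. rewrite RInt_const.
    pose proof (H1 (- INR M) (INR M) ltac:(lra)).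
    rewrite <- (RInt_chasles phi (- INR M) p (INR M)) in H by auto.
    rewrite <- (RInt_chasles phi p q (INR M)) in H by auto.
    pose proof (Hle _ _ Ha). pose proof (Hle _ _ Hb'). lra.
    intros; apply Heq; lra. apply RiemannInt_P14.
Qed.

Lemma step_zero_open (d : R -> R) a b : a <= b -> (forall x, a < x < b -> d x = 0) ->
  IsStepFun d a b.
Proof.
  intros Hab H. exists (cons a (cons b nil)). exists (cons 0 nil).
  unfold adapted_couple; repeat split.
  - unfold ordered_Rlist; intros; simpl in H0; inversion H0;
      [ simpl; assumption | elim (Nat.nle_succ_0 _ H2) ].
  - simpl; unfold Rmin; destruct (Rle_dec a b); lra.
  - simpl; unfold Rmax; destruct (Rle_dec a b); lra.
  - unfold constant_D_eq, open_interval; intros; simpl in H0.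
    inversion H0; [ subst i; simpl in *; apply H; auto | elim (Nat.nle_succ_0 _ H3) ].
Qed.

Lemma int_open f g a b : a <= b -> (forall x, a < x < b -> f x = g x) ->
  Riemann_integrable f a b -> Riemann_integrable g a b.
Proof.
  intros Hab H pf.
  assert (pd : Riemann_integrable (fun x => g x - f x) a b).
  { intros eps. exists (mkStepFun (step_zero_open (fun x => g x - f x) a b Hab
        (fun x Hx => ltac:(cbv beta; rewrite (H x Hx); ring)))).
    exists (mkStepFun (StepFun_P4 a b 0)). split.
    - intros t _. simpl. rewrite Rminus_diag, Rabs_R0. unfold fct_cte; lra.
    - rewrite StepFun_P18. rewrite Rmult_0_l, Rabs_R0. apply cond_pos. }
  apply Riemann_integrable_ext with (fun x => f x + 1 * (g x - f x)).
  intros; ring. apply RiemannInt_P10; auto.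
Qed.

Lemma int_cut f g1 g2 a b c : a <= b ->
  (forall y, a < y < b -> y < c -> f y = g1 y) ->
  (forall y, a < y < b -> c < y -> f y = g2 y) ->
  Riemann_integrable g1 a b -> Riemann_integrable g2 a b -> Riemann_integrable f a b.
Proof.
  intros Hab H1 H2 p1 p2.
  destruct (Rle_dec c a).
  { apply int_open with g2; auto. intros; symmetry; apply H2; lra. }
  destruct (Rle_dec b c).
  { apply int_open with g1; auto. intros; symmetry; apply H1; lra. }
  apply RiemannInt_P21 with c. lra. lra.
  - apply int_open with g1. lra. intros; symmetry; apply H1; lra.
    apply RiemannInt_P22 with b; auto; lra.
  - apply int_open with g2. lra. intros; symmetry; apply H2; lra.
    apply RiemannInt_P23 with a; auto; lra.
Qed.

Lemma int_cut_all f g1 g2 c :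
  (forall y, y < c -> f y = g1 y) -> (forall y, c < y -> f y = g2 y) ->
  (forall a b, Riemann_integrable g1 a b) -> (forall a b, Riemann_integrable g2 a b) ->
  forall a b, Riemann_integrable f a b.
Proof.
  intros H1 H2 p1 p2 a b. destruct (Rle_dec a b).
  - apply int_cut with g1 g2 c; auto.
  - apply RiemannInt_P1. apply int_cut with g1 g2 c; auto. lra.
Qed.

Lemma div_le_iff a m x : 0 < m -> (a / m <= x <-> a <= x * m).
Proof.
  intros Hm. split; intros H.
  - apply Rmult_le_compat_r with (r := m) in H; [|lra]. unfold Rdiv in H.
    rewrite Rmult_assoc, Rinv_l, Rmult_1_r in H by lra. lra.
  - apply Rmult_le_reg_r with m; auto. unfold Rdiv. rewrite Rmult_assoc, Rinv_l, Rmult_1_r by lra. lra.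
Qed.

Definition rp mu th x := (th + x * mu + sqrt ((th + x * mu) ^ 2 + 4 * mu ^ 2)) / 2.
Definition rm mu th x := (th + x * mu - sqrt ((th + x * mu) ^ 2 + 4 * mu ^ 2)) / 2.

Lemma Dq_facts c mu : 0 < mu -> sqrt (c ^ 2 + 4 * mu ^ 2) * sqrt (c ^ 2 + 4 * mu ^ 2) = c ^ 2 + 4 * mu ^ 2
   /\ 0 <= sqrt (c ^ 2 + 4 * mu ^ 2) /\ Rabs c < sqrt (c ^ 2 + 4 * mu ^ 2).
Proof.
  intros Hmu. set (Dq := sqrt (c ^ 2 + 4 * mu ^ 2)).
  assert (H0 : 0 <= c ^ 2 + 4 * mu ^ 2) by nra.
  assert (H1 : Dq * Dq = c ^ 2 + 4 * mu ^ 2) by (apply sqrt_sqrt; auto).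
  assert (H2 : 0 <= Dq) by apply sqrt_pos.
  split; auto. split; auto.
  destruct (Rlt_dec (Rabs c) Dq); auto. exfalso.
  assert (Dq <= Rabs c) by lra. rewrite <- (pow2_abs c) in H1.
  assert (Dq * Dq <= Rabs c * Rabs c) by (apply Rmult_le_compat; auto).
  assert (0 < mu ^ 2) by nra. simpl in H1. nra.
Qed.

Lemma cond_right mu th x y : 0 < mu -> mu < y -> ((y - mu ^ 2 / y - th) / mu <= x <-> y <= rp mu th x).
Proof.
  intros Hmu Hy. unfold rp, rm. set (c := th + x * mu). destruct (Dq_facts c mu Hmu) as [H1 [H2 H3]].
  set (Dq := sqrt (c ^ 2 + 4 * mu ^ 2)) in *.
  assert (Hc : - Dq < c /\ c < Dq) by (unfold Rabs in H3; destruct (Rcase_abs c); lra).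
  rewrite div_le_iff by auto.
  assert (Hyy : (y - mu ^ 2 / y) * y = y * y - mu * mu) by (field; lra).
  split; intro H.
  - assert (Hle : (y - mu ^ 2 / y) * y <= (th + x * mu) * y) by (apply Rmult_le_compat_r; lra).
    rewrite Hyy in Hle. fold c in Hle.
    destruct (Rle_dec y ((c + Dq) / 2)); auto. exfalso.
    assert (0 < (y - (c + Dq) / 2) * (y - (c - Dq) / 2)) by (apply Rmult_lt_0_compat; lra).
    simpl in H1. nra.
  - assert (Hq : y * y - mu * mu <= c * y).
    { assert (0 <= ((c + Dq) / 2 - y) * (y - (c - Dq) / 2)) by (apply Rmult_le_pos; lra).
      simpl in H1. nra. }
    rewrite <- Hyy in Hq. apply Rmult_le_reg_r with y. lra. unfold c in Hq. lra.
Qed.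

Lemma cond_left mu th x y : 0 < mu -> y < - mu -> ((y - mu ^ 2 / y - th) / mu <= x <-> y <= rm mu th x).
Proof.
  intros Hmu Hy. unfold rp, rm. set (c := th + x * mu). destruct (Dq_facts c mu Hmu) as [H1 [H2 H3]].
  set (Dq := sqrt (c ^ 2 + 4 * mu ^ 2)) in *.
  assert (Hc : - Dq < c /\ c < Dq) by (unfold Rabs in H3; destruct (Rcase_abs c); lra).
  rewrite div_le_iff by auto.
  assert (Hyy : (y - mu ^ 2 / y) * y = y * y - mu * mu) by (field; lra).
  split; intro H.
  - assert (Hle : (th + x * mu) * y <= (y - mu ^ 2 / y) * y) by nra.
    rewrite Hyy in Hle. fold c in Hle.
    destruct (Rle_dec y ((c - Dq) / 2)); auto. exfalso.
    assert (0 < (y - (c - Dq) / 2) * ((c + Dq) / 2 - y)) by (apply Rmult_lt_0_compat; lra).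
    simpl in H1. nra.
  - assert (Hq : c * y <= y * y - mu * mu).
    { assert (0 <= ((c - Dq) / 2 - y) * ((c + Dq) / 2 - y)) by (apply Rmult_le_pos; lra).
      simpl in H1. nra. }
    rewrite <- Hyy in Hq. unfold c in Hq.
    destruct (Rle_dec (y - mu ^ 2 / y - th) (x * mu)) as [|n]; auto. exfalso.
    apply Rnot_le_lt in n.
    assert (0 < ((y - mu ^ 2 / y) - (th + x * mu)) * (- y)) by (apply Rmult_lt_0_compat; lra).
    nra.
Qed.

Definition hf mu n th x := fun y =>
  (if Rle_dec ((thetaA mu y - th) / mu) x then 1 else 0) * ybar_density n th y.

Lemma int_const0 a b : Riemann_integrable (fun _ => 0) a b.
Proof. exact (RiemannInt_P14 a b 0). Qed.

Lemma int_ite_le (phi : R -> R) r : cont phi ->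
  forall a b, Riemann_integrable (fun y => if Rle_dec y r then phi y else 0) a b.
Proof.
  intros Hc. apply int_cut_all with phi (fun _ => 0) r.
  - intros y Hy. destruct (Rle_dec y r); auto; lra.
  - intros y Hy. destruct (Rle_dec y r); auto; lra.
  - intros; apply cont_int; auto.
  - intros; apply int_const0.
Qed.

Lemma h_int mu n th x : 0 < mu -> forall a b, Riemann_integrable (hf mu n th x) a b.
Proof.
  intros Hmu. set (phi := ybar_density n th).
  set (Mid := fun y => (if Rle_dec ((0 - th) / mu) x then 1 else 0) * phi y).
  set (g2 := fun y => if Rle_dec y mu then Mid y else (fun y => if Rle_dec y (rp mu th x) then phi y else 0) y).
  apply int_cut_all with (fun y => if Rle_dec y (rm mu th x) then phi y else 0) g2 (- mu).
  - intros y Hy. unfold hf, thetaA. destruct (Rle_dec (Rabs y) mu) as [Ha|Ha].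
    { exfalso. unfold Rabs in Ha; destruct (Rcase_abs y); lra. }
    pose proof (cond_left mu th x y Hmu Hy).
    destruct (Rle_dec ((y - mu ^ 2 / y - th) / mu) x) as [Hc|Hc];
    destruct (Rle_dec y (rm mu th x)) as [Hd|Hd]; unfold phi; try ring; exfalso; tauto.
  - intros y Hy. unfold g2, hf, thetaA. destruct (Rle_dec y mu) as [Hm|Hm].
    + destruct (Rle_dec (Rabs y) mu) as [Ha|Ha].
      2:{ exfalso. unfold Rabs in Ha; destruct (Rcase_abs y); lra. }
      unfold Mid, phi. reflexivity.
    + destruct (Rle_dec (Rabs y) mu) as [Ha|Ha].
      { exfalso. unfold Rabs in Ha; destruct (Rcase_abs y); lra. }
      assert (Hy' : mu < y) by lra.
      pose proof (cond_right mu th x y Hmu Hy').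
      destruct (Rle_dec ((y - mu ^ 2 / y - th) / mu) x) as [Hc|Hc];
      destruct (Rle_dec y (rp mu th x)) as [Hd|Hd]; unfold phi; try ring; exfalso; tauto.
  - apply int_ite_le. apply dens_cont.
  - apply int_cut_all with Mid (fun y => if Rle_dec y (rp mu th x) then phi y else 0) mu.
    + intros y Hy. unfold g2. destruct (Rle_dec y mu); auto; lra.
    + intros y Hy. unfold g2. destruct (Rle_dec y mu); auto; lra.
    + intros a b. unfold Mid. apply Riemann_integrable_scal. apply cont_int, dens_cont.
    + apply int_ite_le. apply dens_cont.
Qed.

Lemma GA_props mu n th x : 0 < mu -> (1 <= n)%nat ->
  (0 <= G_A mu n th x <= 1) /\
  (forall b, 0 < b -> (forall y, th - b <= y <= th + b -> (thetaA mu y - th) / mu <= x) ->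
     1 - 5 / (INR n * b ^ 2) <= G_A mu n th x) /\
  (forall b, 0 < b -> (forall y, th - b <= y <= th + b -> x < (thetaA mu y - th) / mu) ->
     G_A mu n th x <= 5 / (INR n * b ^ 2)).
Proof.
  intros Hmu Hn.
  destruct (RInt_R_bounds (hf mu n th x) (ybar_density n th)) as [H1 [H2 H3]].
  - apply h_int; auto.
  - apply dens_cont.
  - intros y. unfold hf. pose proof (dens_pos n th y).
    destruct (Rle_dec ((thetaA mu y - th) / mu) x); lra.
  - intros; apply dens_le1; auto.
  - unfold G_A. fold (hf mu n th x). split; auto. split.
    + intros b Hb Hw. apply Rle_trans with (RInt (ybar_density n th) (th - b) (th + b)).
      apply dens_lower; auto. apply H2. lra.
      intros y Hy. unfold hf. destruct (Rle_dec ((thetaA mu y - th) / mu) x) as [|Hn']; [ring|].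
      exfalso; apply Hn'; auto.
    + intros b Hb Hw. pose proof (dens_lower n th b Hn Hb).
      assert (G : RInt_R (hf mu n th x) <= 1 - RInt (ybar_density n th) (th - b) (th + b)).
      { apply H3. lra. intros y Hy. unfold hf. destruct (Rle_dec ((thetaA mu y - th) / mu) x) as [Hc|]; [|ring].
        exfalso. pose proof (Hw y Hy). lra. }
      lra.
Qed.

Lemma Rabs_def2b x a : Rabs x <= a -> - a <= x <= a.
Proof. unfold Rabs; destruct (Rcase_abs x); lra. Qed.

Definition Zf (w t : R) := if Rle_dec (Rabs (w + t)) 1 then - w else t - / (w + t).

Lemma Z_rel mu th y : 0 < mu ->
  (thetaA mu y - th) / mu = Zf (th / mu) ((y - th) / mu).
Proof.
  intros Hmu. unfold thetaA, Zf.
  assert (Hv : th / mu + (y - th) / mu = y / mu) by (field; lra).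
  rewrite Hv. assert (Ha : Rabs (y / mu) = Rabs y / mu).
  { unfold Rdiv. rewrite Rabs_mult, Rabs_inv, (Rabs_pos_eq mu) by lra. auto. }
  rewrite Ha.
  destruct (Rle_dec (Rabs y) mu) as [H1|H1]; destruct (Rle_dec (Rabs y / mu) 1) as [H2|H2].
  - field; lra.
  - exfalso. apply H2. apply div_le_iff; auto. lra.
  - exfalso. apply H1. apply div_le_iff in H2; auto. lra.
  - assert (Hy : y <> 0). { intro; subst. rewrite Rabs_R0 in H1. lra. }
    field. split; auto. lra.
Qed.

Lemma Zf_neg w t : Zf (- w) (- t) = - Zf w t.
Proof.
  unfold Zf. replace (- w + - t) with (- (w + t)) by ring. rewrite Rabs_Ropp.
  destruct (Rle_dec (Rabs (w + t)) 1). ring.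
  assert (w + t <> 0). { intro H; rewrite H, Rabs_R0 in n; lra. }
  field; auto.
Qed.

Lemma inv_le1 v : 1 <= v -> 0 < / v <= 1.
Proof.
  intros Hv. split. apply Rinv_0_lt_compat; lra.
  rewrite <- Rinv_1. apply Rinv_le_contravar; lra.
Qed.

Lemma big_pos z w t r : 1 <= z -> 0 < r <= 1/2 -> Rabs (w - z) < r / 2 -> Rabs t <= r / 2 ->
  Rabs (Zf w t + / z) <= 3 * r.
Proof.
  intros Hz Hr Hw Ht. apply Rabs_def2 in Hw. apply Rabs_def2b in Ht.
  assert (Hzz : z * / z = 1) by (field; lra). destruct (inv_le1 z Hz) as [Hi1 Hi2].
  unfold Zf. destruct (Rle_dec (Rabs (w + t)) 1) as [Hv|Hv].
  - apply Rabs_def2b in Hv.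
    assert (Hz2 : z <= 1 + r) by lra.
    assert (1 - r <= / z).
    { assert (z * (1 - r) <= 1) by nra. nra. }
    apply Rabs_le. lra.
  - assert (Hv' : 1 < w + t).
    { destruct (Rle_dec 0 (w + t)). rewrite Rabs_pos_eq in Hv; lra. lra. }
    destruct (inv_le1 (w + t)) as [Hj1 Hj2]; [lra|].
    replace (t - / (w + t) + / z) with (t + (w + t - z) * / (w + t) * / z) by (field; lra).
    assert (Rabs ((w + t - z) * / (w + t) * / z) <= r).
    { rewrite !Rabs_mult, (Rabs_pos_eq (/ (w + t))), (Rabs_pos_eq (/ z)) by lra.
      assert (Rabs (w + t - z) <= r) by (apply Rabs_le; lra).
      assert (0 <= Rabs (w + t - z)) by apply Rabs_pos.
      assert (Rabs (w + t - z) * / (w + t) <= r) by nra. nra. }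
    apply Rle_trans with (Rabs t + Rabs ((w + t - z) * / (w + t) * / z)). apply Rabs_triang.
    assert (Rabs t <= r / 2) by (apply Rabs_le; lra). lra.
Qed.

Lemma inf_pos w t e : 0 < e -> Rabs t <= Rmin 1 (e / 2) -> 3 + 2 / e <= w -> Rabs (Zf w t) <= e.
Proof.
  intros He Ht Hw. assert (H1 : Rabs t <= 1) by (apply Rle_trans with (1 := Ht); apply Rmin_l).
  assert (H2 : Rabs t <= e / 2) by (apply Rle_trans with (1 := Ht); apply Rmin_r).
  apply Rabs_def2b in H1.
  assert (Hpe : 0 < 2 / e) by (apply Rdiv_lt_0_compat; lra).
  unfold Zf. destruct (Rle_dec (Rabs (w + t)) 1) as [Hv|Hv].
  - exfalso. apply Rabs_def2b in Hv. lra.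
  - assert (Hv2 : 2 / e <= w + t) by lra.
    assert (Hi : / (w + t) <= e / 2).
    { replace (e / 2) with (/ (2 / e)) by (field; lra). apply Rinv_le_contravar; lra. }
    assert (0 < / (w + t)) by (apply Rinv_0_lt_compat; lra).
    apply Rle_trans with (Rabs t + Rabs (/ (w + t))).
    unfold Rminus. rewrite <- (Rabs_Ropp (/ (w + t))). apply Rabs_triang.
    rewrite (Rabs_pos_eq (/ (w + t))) by lra. lra.
Qed.

Definition near (w : nat -> R) (c : R) := forall eta, 0 < eta -> exists eps, 0 < eps /\
  exists N, forall n, (N <= n)%nat -> forall t, Rabs t <= eps -> Rabs (Zf (w n) t - c) <= eta.

Lemma near_small w z : Rabs z < 1 -> Un_cv w z -> near w (- z).
Proof.
  intros Hz Hl eta Heta.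
  assert (Hd : 0 < Rmin eta ((1 - Rabs z) / 2)) by (apply Rmin_pos; lra).
  exists ((1 - Rabs z) / 2). split. lra.
  destruct (Hl _ Hd) as [N HN]. exists N. intros n Hn t Ht.
  specialize (HN n Hn). unfold Rdist in HN.
  assert (H1 : Rabs (w n - z) < eta) by (apply Rlt_le_trans with (1 := HN); apply Rmin_l).
  assert (H2 : Rabs (w n - z) < (1 - Rabs z) / 2) by (apply Rlt_le_trans with (1 := HN); apply Rmin_r).
  unfold Zf. destruct (Rle_dec (Rabs (w n + t)) 1) as [Hv|Hv].
  - replace (- w n - - z) with (- (w n - z)) by ring. rewrite Rabs_Ropp. lra.
  - exfalso. apply Hv.
    replace (w n + t) with ((w n - z) + z + t) by ring.
    apply Rle_trans with (Rabs (w n - z + z) + Rabs t). apply Rabs_triang.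
    apply Rle_trans with (Rabs (w n - z) + Rabs z + Rabs t).
    apply Rplus_le_compat_r, Rabs_triang. lra.
Qed.

Lemma near_big w z : 1 <= Rabs z -> Un_cv w z -> near w (- / z).
Proof.
  intros Hz Hl eta Heta.
  set (r := Rmin (eta / 3) (1 / 2)).
  assert (Hr : 0 < r <= 1 / 2) by (split; [apply Rmin_pos; lra | apply Rmin_r]).
  assert (Hr3 : 3 * r <= eta) by (assert (r <= eta / 3) by apply Rmin_l; lra).
  exists (r / 2). split. lra.
  destruct (Hl (r / 2)) as [N HN]. lra. exists N. intros n Hn t Ht.
  specialize (HN n Hn). unfold Rdist in HN.
  destruct (Rle_dec 0 z).
  - rewrite Rabs_pos_eq in Hz by auto.
    replace (Zf (w n) t - - / z) with (Zf (w n) t + / z) by ring.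
    apply Rle_trans with (3 * r); auto. apply big_pos; auto.
  - rewrite Rabs_left in Hz by lra.
    pose proof (big_pos (- z) (- w n) (- t) r Hz Hr) as HB.
    rewrite Zf_neg in HB. replace (- w n - - z) with (- (w n - z)) in HB by ring.
    rewrite !Rabs_Ropp in HB. specialize (HB HN Ht).
    replace (Zf (w n) t - - / z) with (- (- Zf (w n) t + / - z)) by (field; lra).
    rewrite Rabs_Ropp. lra.
Qed.

Lemma near_inf w : (cv_infty w \/ cv_infty (fun n => - w n)) -> near w 0.
Proof.
  intros Hw eta Heta. exists (Rmin 1 (eta / 2)). split. apply Rmin_pos; lra.
  destruct Hw as [Hw|Hw]; destruct (Hw (3 + 2 / eta)) as [N HN]; exists N; intros n Hn t Ht;
    specialize (HN n Hn); rewrite Rminus_0_r.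
  - apply inf_pos; auto. lra.
  - rewrite <- Rabs_Ropp, <- Zf_neg. apply inf_pos; auto. rewrite Rabs_Ropp; auto. lra.
Qed.

Lemma step_disc c x : continuity_pt (step c) x -> x <> c.
Proof.
  intros H Hx. subst x. destruct (H (1/2)) as [alp [Ha Hal]]. lra.
  specialize (Hal (c - alp / 2)). simpl in Hal. unfold Rdist, step in Hal.
  destruct (Rle_dec c (c - alp / 2)); [lra|]. destruct (Rle_dec c c); [|lra].
  assert (Rabs (0 - 1) < 1 / 2). apply Hal. split. split. constructor. lra.
  replace (c - alp / 2 - c) with (- (alp / 2)) by ring. rewrite Rabs_Ropp, Rabs_pos_eq; lra.
  unfold Rabs in H0; destruct (Rcase_abs (0 - 1)); lra.
Qed.

Lemma conv_near (mu theta : nat -> R) c :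
  (forall n, 0 < mu n) -> cv_infty (fun n => sqrt (INR n) * mu n) ->
  near (fun n => theta n / mu n) c -> weak_conv (fun n => G_A (mu n) n (theta n)) (step c).
Proof.
  intros Hpos Hinf Hn x Hcx eps Heps.
  assert (Hxc : x <> c) by (apply step_disc; auto).
  set (eta := Rabs (x - c) / 2).
  assert (Heta : 0 < eta) by (unfold eta; assert (0 < Rabs (x - c)) by (apply Rabs_pos_lt; lra); lra).
  destruct (Hn eta Heta) as [ep [Hep [N1 HN1]]].
  set (K := 5 / (ep ^ 2 * eps) + 1).
  assert (HK0 : 0 < 5 / (ep ^ 2 * eps)) by (apply Rdiv_lt_0_compat; [lra|]; apply Rmult_lt_0_compat; auto; apply pow_lt; auto).
  destruct (Hinf K) as [N2 HN2].
  exists (max (max N1 N2) 1). intros n Hn'.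
  assert (Hn1 : (1 <= n)%nat) by lia. assert (HnN1 : (N1 <= n)%nat) by lia.
  assert (HnN2 : (N2 <= n)%nat) by lia.
  specialize (HN2 n HnN2). specialize (HN1 n HnN1).
  set (m := mu n) in *. assert (Hm : 0 < m) by apply Hpos.
  set (b := ep * m). assert (Hb : 0 < b) by (unfold b; nra).
  assert (Hbound : 5 / (INR n * b ^ 2) < eps).
  { assert (Hs : sqrt (INR n) * sqrt (INR n) = INR n) by (apply sqrt_sqrt, pos_INR).
    assert (Hnb : INR n * b ^ 2 = ep ^ 2 * ((sqrt (INR n) * m) * (sqrt (INR n) * m))).
    { unfold b. rewrite <- Hs at 1. ring. }
    assert (HKK : K < (sqrt (INR n) * m) * (sqrt (INR n) * m)) by (unfold K in *; nra).
    assert (Hep2 : 0 < ep ^ 2) by (apply pow_lt; auto).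
    assert (Hpos2 : 0 < INR n * b ^ 2) by (rewrite Hnb; apply Rmult_lt_0_compat; auto; unfold K in *; nra).
    apply Rmult_lt_reg_r with (INR n * b ^ 2); auto. unfold Rdiv. rewrite Rmult_assoc, Rinv_l, Rmult_1_r by lra.
    rewrite Hnb.
    assert (HK1 : 5 / (ep ^ 2 * eps) * (ep ^ 2 * eps) = 5) by (field; lra).
    unfold K in HKK. nra. }
  assert (Hwin : forall y, theta n - b <= y <= theta n + b ->
    Rabs ((thetaA m y - theta n) / m - c) <= eta).
  { intros y Hy. rewrite Z_rel by auto. apply HN1.
    apply Rabs_le. split.
    - apply Rmult_le_reg_r with m; auto. unfold Rdiv. rewrite Rmult_assoc, Rinv_l by lra. unfold b in Hy. lra.
    - apply Rmult_le_reg_r with m; auto. unfold Rdiv. rewrite Rmult_assoc, Rinv_l by lra. unfold b in Hy. lra. }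
  destruct (GA_props m n (theta n) x Hm Hn1) as [[G0 G1] [GL GU]].
  unfold Rdist, step. destruct (Rle_dec c x) as [Hle|Hlt].
  - assert (Hl : 1 - 5 / (INR n * b ^ 2) <= G_A m n (theta n) x).
    { apply GL; auto. intros y Hy. pose proof (Hwin y Hy). apply Rabs_def2b in H.
      unfold eta in H. rewrite Rabs_pos_eq in H by lra. lra. }
    rewrite Rabs_left1 by lra. lra.
  - assert (Hl : G_A m n (theta n) x <= 5 / (INR n * b ^ 2)).
    { apply GU; auto. intros y Hy. pose proof (Hwin y Hy). apply Rabs_def2b in H.
      unfold eta in H. rewrite Rabs_left in H by lra. lra. }
    rewrite Rminus_0_r, Rabs_pos_eq by lra. lra.
Qed.

Theorem theorem4 (mu theta : nat -> R) (zeta : ereal)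
  (Hpos : forall n, 0 < mu n)
  (Hmu0 : Un_cv mu 0)
  (Hmuinf : cv_infty (fun n => sqrt (INR n) * mu n))
  (Hzeta : cv_ereal (fun n => theta n / mu n) zeta) :
  (forall z, zeta = Fin z -> Rabs z < 1 ->
     weak_conv (fun n => G_A (mu n) n (theta n)) (step (- z))) /\
  (forall z, zeta = Fin z -> 1 <= Rabs z ->
     weak_conv (fun n => G_A (mu n) n (theta n)) (step (- / z))) /\
  ((zeta = PInf \/ zeta = MInf) ->
     weak_conv (fun n => G_A (mu n) n (theta n)) (step 0)).
Proof.
  split; [|split].
  - intros z -> Hz. apply conv_near; auto. apply near_small; auto.
  - intros z -> Hz. apply conv_near; auto. apply near_big; auto.
  - intros [-> | ->]; apply conv_near; auto; apply near_inf; auto.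
Qed.
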